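(* Let $p:\mathbb R^n\to\mathbb R$ be a polynomial with $p(\theta_0)=0$, and assume $p$ is nonnegative on the ball $B_\epsilon(\theta_0)$ centered at $\theta_0$ for some radius $\epsilon>0$. If $m\ge n/2$, then $\int_{B_\epsilon(\theta_0)}p(\theta)^{-m}\,\mathrm d\mu(\theta)=\infty$, where $\mu$ is Lebesgue measure. *)

(* Defs.v *)
From HB Require Import structures.
From mathcomp Require Import all_boot all_order all_algebra.
From mathcomp Require Import all_classical all_reals all_analysis.
From mathcomp Require mpoly.
Set Implicit Arguments. Unset Strict Implicit. Unset Printing Implicit Defensive.
Import Order.TTheory GRing.Theory Num.Theory.
Local Open Scope classical_set_scope.
Local Open Scope ring_scope.

(* Points of R^n are n-tuples of reals; n.-tuple R carries the product
   (Borel) sigma-algebra from measurable_structure.v. *)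

(* Lebesgue measure on R^n, defined as the n-fold product of the Lebesgue
   measure on R, in exactly the way the library defines binary product
   measures ([product_measure1]: integrate the measure of the sections). *)
Fixpoint lebesgue_n (R : realType) (n : nat) : set (n.-tuple R) -> \bar R :=
  match n return set (n.-tuple R) -> \bar R with
  | 0 => fun A => ((\1_A [tuple] : R)%:E)
  | n'.+1 => fun A =>
      integral (@lebesgue_measure R) setT (fun x : R =>
         @lebesgue_n R n' [set t : n'.-tuple R | A [tuple of x :: t]])
  end.

Definition euclid_ball (R : realType) (n : nat) (c : n.-tuple R) (eps : R)
  : set (n.-tuple R) :=
  [set t | \sum_(i < n) (tnth t i - tnth c i) ^+ 2 < eps ^+ 2].

Definition poly_eval (R : realType) (n : nat) (p : mpoly.mpoly n R)
  (t : n.-tuple R) : R := mpoly.meval (fun i => tnth t i) p.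

(* x^(-m) as an extended real, for x >= 0: for x = 0 it is +oo when m > 0,
   1 when m = 0 and 0 when m < 0; otherwise the usual real power. *)
Definition pow_neg (R : realType) (x m : R) : \bar R :=
  if x == 0 then (if m == 0 then 1%E else if 0 < m then +oo%E else 0%E)
  else ((x `^ (- m))%:E).

(* Main.v *)
Require Import Defs.
From HB Require Import structures.
From mathcomp Require Import all_boot all_order all_algebra.
From mathcomp Require Import all_classical all_reals all_analysis.
From mathcomp Require Import ring lra.
From mathcomp Require mpoly.
Set Implicit Arguments. Unset Strict Implicit. Unset Printing Implicit Defensive.
Import Order.TTheory GRing.Theory Num.Theory.
Local Open Scope classical_set_scope.
Local Open Scope ring_scope.

Definition TP (R : realType) n (c : n.-tuple R) (F : n.-tuple R -> R) :=
  exists g : 'I_n -> R, exists C : R, 0 <= C /\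
    forall r x, 0 < r -> r <= 1 -> (forall i, `|tnth x i - tnth c i| <= r) ->
      `|F x - F c - \sum_i g i * (tnth x i - tnth c i)| <= C * r ^+ 2.

Lemma lin_bound (R : realType) n (g d : 'I_n -> R) r :
  (forall i, `|d i| <= r) -> `|\sum_i g i * d i| <= (\sum_i `|g i|) * r.
Proof.
move=> hd; apply: (le_trans (ler_norm_sum _ _ _)).
rewrite mulr_suml; apply: ler_sum => i _; rewrite normrM.
by apply: ler_wpM2l => //.
Qed.

Lemma TP_ext (R : realType) n (c : n.-tuple R) F G :
  (forall x, F x = G x) -> TP c F -> TP c G.
Proof.
move=> FG [g [C [C0 H]]]; exists g, C; split => // r x r0 r1 hx.
by rewrite -!FG; apply: H.
Qed.

Lemma TP_const (R : realType) n (c : n.-tuple R) a : TP c (fun _ => a).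
Proof.
exists (fun _ => 0), 0; split => // r x _ _ _.
by rewrite subrr big1 ?subr0 ?normr0 ?mul0r // => i _; rewrite mul0r.
Qed.

Lemma TP_coord (R : realType) n (c : n.-tuple R) j : TP c (fun x => tnth x j).
Proof.
exists (fun i => (i == j)%:R), 0; split => // r x _ _ _.
rewrite (bigD1 j) //= eqxx mul1r big1 ?addr0 ?subrr ?normr0 ?mul0r //.
by move=> i /negbTE ->; rewrite mul0r.
Qed.

Lemma TP_add (R : realType) n (c : n.-tuple R) F1 F2 :
  TP c F1 -> TP c F2 -> TP c (fun x => F1 x + F2 x).
Proof.
move=> [g1 [C1 [C10 H1]]] [g2 [C2 [C20 H2]]].
exists (fun i => g1 i + g2 i), (C1 + C2); split; first exact: addr_ge0.
move=> r x r0 r1 hx.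
have -> : F1 x + F2 x - (F1 c + F2 c) - \sum_i (g1 i + g2 i) * (tnth x i - tnth c i)
  = (F1 x - F1 c - \sum_i g1 i * (tnth x i - tnth c i)) +
    (F2 x - F2 c - \sum_i g2 i * (tnth x i - tnth c i)).
  rewrite -[in RHS]addrA.
  under eq_bigr do rewrite mulrDl.
  rewrite big_split /=; ring.
rewrite mulrDl; apply: (le_trans (ler_normD _ _)); apply: lerD; [exact: H1|exact: H2].
Qed.

Lemma TP_mul (R : realType) n (c : n.-tuple R) F1 F2 :
  TP c F1 -> TP c F2 -> TP c (fun x => F1 x * F2 x).
Proof.
move=> [g1 [C1 [C10 H1]]] [g2 [C2 [C20 H2]]].
set G1 := \sum_i `|g1 i|; set G2 := \sum_i `|g2 i|.
have G10 : 0 <= G1 by apply: sumr_ge0.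
have G20 : 0 <= G2 by apply: sumr_ge0.
exists (fun i => F1 c * g2 i + F2 c * g1 i),
  (`|F1 c| * C2 + `|F2 c| * C1 + (G1 + C1) * (G2 + C2)).
split; first by rewrite !addr_ge0 ?mulr_ge0 ?addr_ge0.
move=> r x r0 r1 hx.
set a := F1 c; set b := F2 c.
set u := \sum_i g1 i * (tnth x i - tnth c i).
set v := \sum_i g2 i * (tnth x i - tnth c i).
have hu : `|u| <= G1 * r by apply: lin_bound.
have hv : `|v| <= G2 * r by apply: lin_bound.
have he1 := H1 r x r0 r1 hx; have he2 := H2 r x r0 r1 hx.
rewrite -/a -/u in he1; rewrite -/b -/v in he2.
set e1 := F1 x - a - u in he1 *; set e2 := F2 x - b - v in he2 *.
have r2 : r ^+ 2 <= r by rewrite expr2 ger_pMl.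
have hw1 : `|u + e1| <= (G1 + C1) * r.
  apply: (le_trans (ler_normD _ _)); rewrite mulrDl; apply: lerD => //.
  apply: (le_trans he1); exact: ler_wpM2l.
have hw2 : `|v + e2| <= (G2 + C2) * r.
  apply: (le_trans (ler_normD _ _)); rewrite mulrDl; apply: lerD => //.
  apply: (le_trans he2); exact: ler_wpM2l.
have -> : F1 x * F2 x - a * b - \sum_i (a * g2 i + b * g1 i) * (tnth x i - tnth c i)
   = a * e2 + b * e1 + (u + e1) * (v + e2).
  under eq_bigr do rewrite mulrDl -!mulrA.
  rewrite big_split /= -!mulr_sumr -/u -/v /e1 /e2; ring.
have b1 : `|a * e2| <= `|a| * C2 * r ^+ 2 by rewrite normrM -mulrA; exact: ler_wpM2l.
have b2 : `|b * e1| <= `|b| * C1 * r ^+ 2 by rewrite normrM -mulrA; exact: ler_wpM2l.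
have b3 : `|(u + e1) * (v + e2)| <= (G1 + C1) * (G2 + C2) * r ^+ 2.
  by rewrite normrM expr2 mulrACA; apply: ler_pM.
have -> : (`|a| * C2 + `|b| * C1 + (G1 + C1) * (G2 + C2)) * r ^+ 2 =
  `|a| * C2 * r ^+ 2 + `|b| * C1 * r ^+ 2 + (G1 + C1) * (G2 + C2) * r ^+ 2 by ring.
apply: (le_trans (ler_normD _ _)); apply: lerD => //.
by apply: (le_trans (ler_normD _ _)); apply: lerD.
Qed.

Lemma TP_sum (R : realType) n (c : n.-tuple R) (I : Type) (s : seq I) F :
  (forall i, TP c (F i)) -> TP c (fun x => \sum_(i <- s) F i x).
Proof.
move=> H; elim: s => [|i s IH].
  by apply: (TP_ext (F := fun _ => 0)) => [x|]; rewrite ?big_nil //; exact: TP_const.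
apply: (TP_ext (F := fun x => F i x + \sum_(j <- s) F j x)) => [x|].
  by rewrite big_cons.
exact: TP_add.
Qed.

Lemma TP_prod (R : realType) n (c : n.-tuple R) (I : Type) (s : seq I) F :
  (forall i, TP c (F i)) -> TP c (fun x => \prod_(i <- s) F i x).
Proof.
move=> H; elim: s => [|i s IH].
  by apply: (TP_ext (F := fun _ => 1)) => [x|]; rewrite ?big_nil //; exact: TP_const.
apply: (TP_ext (F := fun x => F i x * \prod_(j <- s) F j x)) => [x|].
  by rewrite big_cons.
exact: TP_mul.
Qed.

Lemma TP_pow (R : realType) n (c : n.-tuple R) F k :
  TP c F -> TP c (fun x => F x ^+ k).
Proof.
move=> H; elim: k => [|k IH].
  by apply: (TP_ext (F := fun _ => 1)) => [x|]; rewrite ?expr0 //; exact: TP_const.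
apply: (TP_ext (F := fun x => F x * F x ^+ k)) => [x|]; first by rewrite exprS.
exact: TP_mul.
Qed.

Lemma TP_poly (R : realType) n (c : n.-tuple R) (p : mpoly.mpoly n R) :
  TP c (poly_eval p).
Proof.
apply: (TP_ext (fun x => esym (mpoly.mevalE (fun i => tnth x i) p))).
apply: TP_sum => m; apply: TP_mul; first exact: TP_const.
apply: TP_prod => i; apply: TP_pow; exact: TP_coord.
Qed.

Lemma TP_min (R : realType) n (c : n.-tuple R) F eps :
  TP c F -> F c = 0 -> 0 < eps ->
  (forall x, euclid_ball c eps x -> 0 <= F x) ->
  exists C : R, 0 <= C /\ forall r x, 0 < r -> r <= 1 ->
    (forall i, `|tnth x i - tnth c i| <= r) -> F x <= C * r ^+ 2.
Proof.
move=> [g [C [C0 H]]] Fc0 eps0 Fge0.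
have key i t : 0 < `|t| -> `|t| <= 1 -> `|t| < eps -> - (g i * t) <= C * t ^+ 2.
  move=> t0 t1 te.
  pose x := [tuple tnth c j + (if j == i then t else 0) | j < n].
  have dx j : tnth x j - tnth c j = if j == i then t else 0.
    by rewrite tnth_mktuple addrC addKr.
  have hx j : `|tnth x j - tnth c j| <= `|t|.
    by rewrite dx; case: ifP => _; rewrite ?normr0.
  have := H _ x t0 t1 hx; rewrite real_normK ?num_real // Fc0 subr0.
  have -> : \sum_i0 g i0 * (tnth x i0 - tnth c i0) = g i * t.
    rewrite (bigD1 i) //= dx eqxx big1 ?addr0 // => j /negbTE ji.
    by rewrite dx ji mulr0.
  have Fx : 0 <= F x.
    apply: Fge0; rewrite /euclid_ball /=.
    rewrite (bigD1 i) //= dx eqxx big1 ?addr0; last first.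
      by move=> j /negbTE ji; rewrite dx ji expr0n.
    by rewrite -real_normK ?num_real // !expr2; apply: ltr_pM.
  move=> /ler_normlP [h1 h2]; lra.
have g0 i : g i = 0.
  apply/eqP/negPn/negP => gi0.
  have ga : 0 < `|g i| by rewrite normr_gt0.
  pose d := Num.min 1 (Num.min (eps / 2) (`|g i| / (2 * (C + 1)))).
  have d0 : 0 < d.
    by rewrite !lt_min ltr01 divr_gt0 //= divr_gt0 // mulr_gt0 // ltr_wpDl.
  have d1 : d <= 1 by rewrite ge_min lexx.
  have de : d < eps.
    apply: (le_lt_trans (y := eps / 2)); first by rewrite !ge_min lexx orbT.
    by rewrite ltr_pdivrMr // ltr_pMr // ltr1n.
  have dg : d <= `|g i| / (2 * (C + 1)) by rewrite !ge_min lexx !orbT.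
  have nd : `|d| = d by rewrite ger0_norm // ltW.
  have nmd : `|- d| = d by rewrite normrN.
  have k1 := key i d; rewrite nd in k1; have {k1} k1 := k1 d0 d1 de.
  have k2 := key i (- d); rewrite nmd in k2; have {k2} k2 := k2 d0 d1 de.
  rewrite sqrrN in k2.
  have : `|g i| * d <= C * d ^+ 2.
    case: (lerP 0 (g i)) => gs.
      by rewrite ger0_norm //; move: k2; rewrite mulrN opprK.
    by rewrite ltr0_norm // mulNr.
  rewrite expr2 mulrA ler_pM2r // => h.
  have : C * d <= C * (`|g i| / (2 * (C + 1))) by apply: ler_wpM2l.
  have : C * (`|g i| / (2 * (C + 1))) < `|g i|.
    rewrite mulrA ltr_pdivrMr ?mulr_gt0 ?ltr_wpDl //.
    rewrite mulrC ltr_pM2l //; lra.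
  lra.
exists C; split => // r x r0 r1 hx.
have := H r x r0 r1 hx; rewrite Fc0 subr0 big1 ?subr0; last by move=> i _; rewrite g0 mul0r.
by move/(le_trans (ler_norm _)).
Qed.

Lemma leb_set0 (R : realType) n : @lebesgue_n R n set0 = 0%E.
Proof.
elim: n => [|n IH] /=; first by rewrite indicE in_set0.
rewrite (_ : (fun x : R => _) = fun _ => 0%E); first exact: integral0.
by apply: funext => x; rewrite -IH.
Qed.

Lemma leb_box (R : realType) n (a b : 'I_n -> R) : (forall i, a i <= b i) ->
  @lebesgue_n R n [set t | forall i, a i < tnth t i <= b i] =
  (\prod_i (b i - a i))%:E.
Proof.
elim: n a b => [|n IH] a b ab /=.
  by rewrite big_ord0 indicE mem_set //= => -[].
set E := [set` `]a ord0, b ord0]%R].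
set P := \prod_(j < n) (b (lift ord0 j) - a (lift ord0 j)).
have P0 : 0 <= P by apply: prodr_ge0 => j _; rewrite subr_ge0.
transitivity (\int[@lebesgue_measure R]_(x in setT) (P * \1_E x)%:E)%E.
  apply: eq_integral => x _; rewrite indicE.
  case: (boolP (x \in E)) => xE.
    rewrite mulr1 -IH; last by move=> j; apply: ab.
    congr (lebesgue_n _); apply/seteqP; split => t /= h.
      by move=> j; rewrite -(tnthS x t) h.
    move=> i; case: (unliftP ord0 i) => [j ->|->]; first by rewrite tnthS.
    by rewrite tnth0; move: xE; rewrite /E inE /= in_itv.

  rewrite /= mulr0n mulr0.
  rewrite (_ : [set t | _] = set0); first exact: leb_set0.
  apply/seteqP; split => t //= h.
  move/negP: xE; apply; apply: mem_set; rewrite /E /= in_itv /=.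
  by have := h ord0; rewrite tnth0.
have := integralZl_indic (m := @lebesgue_measure R) measurableT (fun _ => E) P.
rewrite /= => ->; last 2 first.
- by move=> /lt_le_trans/(_ P0); rewrite ltxx.
- exact: measurable_itv.
rewrite integral_indic //; last exact: measurable_itv.
rewrite (_ : E `&` _ = E); last by apply/seteqP; split => x //= [].
have L := lebesgue_measure_itv `]a ord0, b ord0]%R.
rewrite /= lte_fin in L.
transitivity (P%:E * (if (a ord0 < b ord0)%R then ((b ord0)%:E + (- a ord0)%:E) else 0))%E.
  by congr (_ * _)%E; exact: L.
rewrite big_ord_recl; case: ltgtP (ab ord0) => // h _.
  rewrite -EFinD -EFinM mulrC.
  by [].
by rewrite h subrr mul0r mule0.
Qed.

Lemma pow_lemma (R : realType) (q u m : R) (n : nat) :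
  0 < q -> 0 < u -> q <= u ^+ 2 -> u <= 1 -> n%:R / 2 <= m ->
  (u^-1) ^+ n <= q `^ (- m).
Proof.
move=> q0 u0 qu u1 nm.
have u21 : u ^+ 2 <= 1 by rewrite expr_le1 // ltW.
have q1 : q <= 1 by apply: le_trans qu u21.
have h2 : 0 <= n%:R / 2 :> R by rewrite divr_ge0.
apply: (le_trans (y := q `^ (- (n%:R / 2)))); last first.
  by apply: ger_powR; [rewrite q0 q1 | rewrite lerN2].
rewrite powRN exprVn.
have hu : u ^+ n = (u ^+ 2) `^ (n%:R / 2).
  have u0' : 0 <= u by exact: ltW.
  rewrite -[u ^+ 2](powR_mulrn _ u0') -powRrM -(powR_mulrn _ u0'); congr (_ `^ _).
  by rewrite mulrC -mulrA mulVf ?mulr1 // pnatr_eq0.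
rewrite hu lef_pV2 ?posrE ?powR_gt0 ?exprn_gt0 //.
by apply: ge0_ler_powR => //; rewrite nnegrE; [exact: ltW | exact: exprn_ge0 (ltW u0)].
Qed.

Section S.
Import HBNNSimple.

Definition gfun (R : realType) n (B : nat -> set (n.-tuple R)) (cc : nat -> R)
  (mB : forall k, measurable (B k)) (cc0 : forall k, 0 <= cc k) K :
  {nnsfun (n.-tuple R) >-> R} :=
  sum_nnsfun (fun k => scale_nnsfun (indic_nnsfun R (mB k)) (cc0 k)) K.

Lemma gfunE (R : realType) n (B : nat -> set (n.-tuple R)) (cc : nat -> R)
  (mB : forall k, measurable (B k)) (cc0 : forall k, 0 <= cc k) K y :
  gfun mB cc0 K y = \sum_(k < K) cc k * \1_(B k) y.
Proof. by rewrite /gfun sum_nnsfunE. Qed.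

Lemma gfun_in (R : realType) n (B : nat -> set (n.-tuple R)) (cc : nat -> R)
  (mB : forall k, measurable (B k)) (cc0 : forall k, 0 <= cc k) K y k :
  (forall j k x, B j x -> B k x -> j = k) -> (k < K)%N -> B k y ->
  gfun mB cc0 K y = cc k.
Proof.
move=> dis kK Bky; rewrite gfunE (bigD1 (Ordinal kK)) //= indicE mem_set // mulr1.
rewrite big1 ?addr0 // => j /eqP jk; rewrite indicE memNset ?mulr0 //.
move=> Bjy; apply: jk; apply: val_inj => /=; exact: dis Bjy Bky.
Qed.

Lemma gfun_out (R : realType) n (B : nat -> set (n.-tuple R)) (cc : nat -> R)
  (mB : forall k, measurable (B k)) (cc0 : forall k, 0 <= cc k) K y :
  (forall k, (k < K)%N -> ~ B k y) -> gfun mB cc0 K y = 0.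
Proof.
move=> h; rewrite gfunE big1 // => k _; rewrite indicE memNset ?mulr0 //.
exact: h.
Qed.

Lemma sint_gfun (R : realType) n (mu : set (n.-tuple R) -> \bar R)
  (B : nat -> set (n.-tuple R)) (cc : nat -> R)
  (mB : forall k, measurable (B k)) (cc0 : forall k, 0 <= cc k) K :
  mu set0 = 0%E -> (forall j k x, B j x -> B k x -> j = k) ->
  (forall k, 0 < cc k) -> injective cc ->
  sintegral mu (gfun mB cc0 K) = (\sum_(k < K) (cc k)%:E * mu (B k))%E.
Proof.
move=> mu0 dis ccp ccinj.
have pre k : (k < K)%N -> (gfun mB cc0 K) @^-1` [set cc k] = B k.
  move=> kK; apply/seteqP; split => y /=.
    have [[j jK Bjy]|] := pselect (exists2 j, (j < K)%N & B j y).
      by rewrite (gfun_in _ _ dis jK Bjy) => /ccinj <-.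
    move=> hn; rewrite gfun_out => [/esym/eqP|j jK Bjy]; last by apply: hn; exists j.
    by rewrite gt_eqF.
  by move=> Bky; rewrite (gfun_in _ _ dis kK Bky).
rewrite /sintegral -(fsbig_widen (cc @` `I_K)) //; last first.
  move=> x [_ /= nx]; rewrite /preimage /=.
  have [->|x0] := eqVneq x 0; first by rewrite mul0e.
  rewrite (_ : [set _ | _] = set0) ?mu0 ?mule0 //.
  apply/seteqP; split => y //= gy.
  have [[j jK Bjy]|hn] := pselect (exists2 j, (j < K)%N & B j y).
    by apply: nx; exists j => //; rewrite -gy (gfun_in _ _ dis jK Bjy).
  by move: x0; rewrite -gy gfun_out ?eqxx // => j jK Bjy; apply: hn; exists j.
rewrite fsbig_image; last by move=> i j _ _; apply: ccinj.
rewrite -fsbig_ord; apply: eq_bigr => k _; by rewrite pre.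
Qed.
End S.
Unset Implicit Arguments.
Import HBNNSimple.

Theorem propositionA4 (R : realType) (n : nat) (hn : (0 < n)%N)
  (p : mpoly.mpoly n R) (theta0 : n.-tuple R) (eps : R) (m : R) :
  poly_eval p theta0 = 0 ->
  0 < eps ->
  (forall theta, euclid_ball theta0 eps theta -> 0 <= poly_eval p theta) ->
  n%:R / 2 <= m ->
  (\int[@lebesgue_n R n]_(theta in euclid_ball theta0 eps)
      pow_neg (poly_eval p theta) m)%E = +oo%E.
Proof.
move=> Fc0 eps0 Fge0 nm.
have nR0 : 0 < n%:R :> R by rewrite ltr0n.
have m0 : 0 < m by apply: lt_le_trans nm; rewrite divr_gt0.
have [C [C0 HC]] := TP_min (TP_poly theta0 p) Fc0 eps0 Fge0.
set D := C + 1.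
have D1 : 1 <= D by rewrite /D lerDr.
have D0 : 0 < D by apply: lt_le_trans D1.
set s := Num.min (D^-1) (eps / (n%:R + 1)).
have s0 : 0 < s by rewrite lt_min invr_gt0 D0 divr_gt0 // ltr_wpDl // ltW.
have sD : D * s <= 1.
  rewrite -(mulfV (_ : D != 0)); last by rewrite gt_eqF.
  by apply: ler_wpM2l; [exact: ltW | rewrite ge_min lexx].
have s1 : s <= 1 by apply: le_trans sD; rewrite ler_peMl // ltW.
have seps : s * (n%:R + 1) <= eps.
  have n10 : 0 < n%:R + 1 :> R by rewrite ltr_wpDl.
  by rewrite -ler_pdivlMr // ge_min lexx orbT.
pose i0 := Ordinal hn.
pose t k := s / 2 ^+ k.
have t0 k : 0 < t k by rewrite divr_gt0 // exprn_gt0.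
have ts k : t k <= s.
  rewrite /t ler_pdivrMr ?exprn_gt0 //.
  rewrite ler_pMr //.
  by apply: exprn_ege1; rewrite ler1n.
have tmono j k : (j < k)%N -> t k <= t j / 2.
  move=> jk; rewrite /t -mulrA -invfM -exprSr ler_pM2l // lef_pV2 ?posrE ?exprn_gt0 //.
  by rewrite ler_eXn2l // ltr1n.
pose a k i := tnth theta0 i + (if i == i0 then t k / 2 else 0).
pose b k i := tnth theta0 i + t k.
pose B k := [set x : n.-tuple R | forall i, a k i < tnth x i <= b k i].
have mB k : measurable (B k).
  have -> : B k = \bigcap_(i in [set: 'I_n])
      ((fun x : n.-tuple R => tnth x i) @^-1` [set` `]a k i, b k i]%R]).
    apply/seteqP; split => x /= h.
      by move=> i _ /=; rewrite in_itv /=; exact: h i.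
    by move=> i; have := h i I; rewrite /= in_itv /=.
  apply: fin_bigcap_measurable; first exact: finite_finset.
  move=> i _; have := measurable_tnth i measurableT (measurable_itv `]a k i, b k i]%R).
  by rewrite setTI.
pose cc k := ((D * t k)^-1) ^+ n.
have ccp k : 0 < cc k by rewrite exprn_gt0 // invr_gt0 mulr_gt0.
have cc0 k : 0 <= cc k by apply: ltW.
have cclt j k : (j < k)%N -> cc j < cc k.
  move=> jk; rewrite /cc ltrXn2r ?invr_ge0 ?mulr_ge0 ?ltW // -?lt0n //.
  rewrite ltf_pV2 ?posrE ?mulr_gt0 // ltr_pM2l //.
  by apply: le_lt_trans (tmono _ _ jk) _; rewrite ltr_pdivrMr // ltr_pMr // ltr1n.
have ccinj : injective cc.
  move=> u v; case: (ltngtP u v) => // uv /eqP.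
    by rewrite (lt_eqF (cclt _ _ uv)).
  by rewrite eq_sym (lt_eqF (cclt _ _ uv)).
have dis j k x : B j x -> B k x -> j = k.
  move=> Bj Bk; case: (ltngtP j k) => // jk; exfalso.
    have := Bj i0; have := Bk i0; rewrite /a /b eqxx => /andP[_ hk] /andP[hj _].
    have := tmono _ _ jk; lra.
  have := Bj i0; have := Bk i0; rewrite /a /b eqxx => /andP[hk _] /andP[_ hj].
  have := tmono _ _ jk; lra.
have inB k x : B k x -> euclid_ball theta0 eps x /\ forall i, `|tnth x i - tnth theta0 i| <= t k.
  move=> Bkx.
  have hd i : 0 < tnth x i - tnth theta0 i <= t k.
    have := Bkx i; rewrite /a /b; have := t0 k.
    case: (i == i0) => /= tk0 /andP[h1 h2]; apply/andP; split; lra.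
  have hn' i : `|tnth x i - tnth theta0 i| <= t k.
    by have /andP[h1 h2] := hd i; rewrite ger0_norm // ltW.
  split => //; rewrite /euclid_ball /=.
  apply: (le_lt_trans (y := \sum_(i < n) t k ^+ 2)).
    apply: ler_sum => i _; have /andP[h1 h2] := hd i; rewrite !expr2.
    by apply: ler_pM => //; exact: ltW.
  rewrite sumr_const card_ord -mulr_natl.
  have tk2 : t k ^+ 2 <= s ^+ 2 by rewrite !expr2; apply: ler_pM => //; exact: ltW.
  apply: (le_lt_trans (y := n%:R * s ^+ 2)); first by apply: ler_wpM2l => //; exact: ltW.
  apply: (lt_le_trans (y := (s * (n%:R + 1)) ^+ 2)).
    rewrite exprMn mulrC ltr_pM2l ?exprn_gt0 //.
    rewrite sqrrD1 -addrA.
    have h1 : 0 <= n%:R ^+ 2 :> R by apply: exprn_ge0.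
    have h2 : 0 <= n%:R :> R by [].
    rewrite mulr2n; lra.
  by rewrite !expr2; apply: ler_pM => //; apply: mulr_ge0; rewrite ?addr_ge0 // ltW.
have lb k x : B k x -> ((cc k)%:E <= pow_neg (poly_eval p x) m)%E.
  move=> Bkx; have [ball hd] := inB k x Bkx; have Fx0 := Fge0 _ ball.
  have Fle : poly_eval p x <= (D * t k) ^+ 2.
    apply: le_trans (HC (t k) x (t0 k) (le_trans (ts k) s1) hd) _.
    rewrite [X in _ <= X]exprMn; apply: (ler_wpM2r (exprn_ge0 _ (ltW (t0 k)))).
    apply: (le_trans (y := D)); first by rewrite /D lerDl.
    by rewrite expr2 ler_pMr.
  rewrite /pow_neg; case: eqP => [_|/eqP Fne].
    by rewrite (gt_eqF m0) m0 leey.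
  rewrite lee_fin; apply: pow_lemma => //.
  - by rewrite lt_neqAle eq_sym Fne Fx0.
  - exact: mulr_gt0.
  - apply: le_trans sD; apply: ler_wpM2l; [exact: ltW | exact: ts].
have vol k : ((cc k)%:E * @lebesgue_n R n (B k) = ((D^-1) ^+ n / 2)%:E)%E.
  have tk0 : t k != 0 by rewrite gt_eqF.
  have prodE : \prod_i (b k i - a k i) = t k ^+ n / 2.
    rewrite (bigD1 i0) //= /a /b eqxx.
    rewrite (eq_bigr (fun _ => t k)); last by move=> i /negbTE ->; rewrite addr0; ring.
    rewrite prodr_const cardC1 card_ord -[in RHS](prednK hn) exprS; by field.
  have LB : @lebesgue_n R n (B k) = (\prod_i (b k i - a k i))%:E.
    apply: leb_box => i; rewrite /a /b lerD2l; case: ifP => _; last exact: ltW (t0 k).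
    by rewrite ler_pdivrMr // ler_pMr // ler1n.
  rewrite LB prodE -EFinM /cc; congr EFin.
  rewrite invfM exprMn -!mulrA; congr (_ * _).
  by rewrite mulrA -exprMn mulVf // expr1n mul1r.
have f0 x : (0 <= pow_neg (poly_eval p x) m)%E.
  rewrite /pow_neg; case: ifP => _; last by rewrite lee_fin powR_ge0.
  by case: ifP => _; [rewrite lee_fin ler01 | case: ifP].
rewrite /integral.
set g := (_ \_ _).
have g0 y : (0 <= g y)%E by rewrite /g /patch; case: ifP.
have gpos y : (g^\+ y = g y)%E.
  by apply: (ge0_funeposE (D := setT)); rewrite ?in_setT.
have gneg y : (g^\- y = 0)%E.
  by apply: (ge0_funenegE (D := setT)); rewrite ?in_setT.
set S1 := ereal_sup _.
set S2 := ereal_sup _.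
have S2le : (S2 <= 0)%E.
  apply: ge_ereal_sup => _ [h /= hle <-].
  have h0 y : h y = 0.
    apply/eqP; rewrite eq_le fun_ge0 andbT -lee_fin; have := hle y.
    by rewrite gneg.
  rewrite /sintegral fsbig1 // => x _.
  have [->|x0] := eqVneq x 0; first by rewrite mul0e.
  rewrite (_ : _ @^-1` _ = set0) ?leb_set0 ?mule0 //.
  by apply/seteqP; split => y //=; rewrite h0 => /esym/eqP; rewrite (negbTE x0).
set kap := (D^-1) ^+ n / 2.
have kap0 : 0 < kap by rewrite divr_gt0 // exprn_gt0 // invr_gt0.
have S1ge (K : nat) : ((K%:R * kap)%:E <= S1)%E.
  apply: ereal_sup_ubound; exists (gfun mB cc0 K).
    move=> y /=; rewrite gpos.
    have [[k kK Bky]|hn'] := pselect (exists2 k, (k < K)%N & B k y).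
      rewrite (gfun_in _ _ dis kK Bky) /g /patch.
      have [yb _] := inB k y Bky; rewrite mem_set //; exact: lb Bky.
    by rewrite gfun_out // => k kK Bky; apply: hn'; exists k.
  rewrite sint_gfun //; last exact: leb_set0.
  rewrite (eq_bigr (fun _ => kap%:E)); last by move=> k _; exact: vol.
  by rewrite sumEFin sumr_const card_ord mulr_natl.
have S1oo : S1 = +oo%E.
  clearbody S1; move: S1 S1ge => [r| |] // h.
    have := h (Num.truncn (r / kap)).+1; rewrite lee_fin.
    have := truncnS_gt (r / kap); rewrite ltr_pdivrMr // => h1 h2.
    by have := lt_le_trans h1 h2; rewrite ltxx.
  by have := h 0%N; rewrite mul0r.
rewrite S1oo addye //.
have NS2 : (0 <= - S2)%E by rewrite oppe_ge0.
by apply/negP => /eqP e; rewrite e in NS2.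
Qed.
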